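(* Let $F:\mathbf{Sets}\to\mathbf{Sets}$ be a functor that preserves pullbacks along injective morphisms. Let $\mathbf{Coalg}_F$ be the category of $F$-coalgebras and let $\mathcal{M}_F$ be the class of all $F$-homomorphisms $f:(A,\alpha_A)\to(B,\alpha_B)$ whose underlying function $f:A\to B$ is injective. Then $(\mathbf{Coalg}_F,\mathcal{M}_F)$ is an $\mathcal{M}$-adhesive category.
   Context: An $F$-coalgebra is a pair $(M,\alpha_M)$ with $M$ a set and $\alpha_M:M\to F(M)$ a function; an $F$-homomorphism $f:(M,\alpha_M)\to(N,\alpha_N)$ is a function $f:M\to N$ with $F(f)\circ\alpha_M=\alpha_N\circ f$. These form the category $\mathbf{Coalg}_F$. A functor $F:\mathbf{Sets}\to\mathbf{Sets}$ preserves pullbacks along injective morphisms if for every pullback square $A\to B$, $A\to C$, $f:B\to D$, $g:C\to D$ in $\mathbf{Sets}$ in which $f$ or $g$ is injective, the image square under $F$ is a pullback in $\mathbf{Sets}$. A pair $(\mathbf{C},\mathcal{M})$ with $\mathcal{M}$ a class of monomorphisms is an $\mathcal{M}$-adhesive category if: $\mathcal{M}$ contains all identities and is closed under composition; pushouts and pullbacks along $\mathcal{M}$-morphisms exist and $\mathcal{M}$ is stable under pushouts and pullbacks; and pushouts along $\mathcal{M}$-morphisms are vertical weak van Kampen squares, i.e. for every commutative cube whose bottom face is a pushout of $f:A\to C$ and $m:A\to B$ with $m\in\mathcal{M}$, whose back faces are pullbacks, and whose vertical morphisms all lie in $\mathcal{M}$, the top face is a pushout if and only if the front faces are pullbacks.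 *)

(* Defs.v *)
From Stdlib Require Import ProofIrrelevance FunctionalExtensionality.

Record Category : Type := {
  Obj : Type;
  Hom : Obj -> Obj -> Type;
  idm : forall A, Hom A A;
  comp : forall A B C, Hom B C -> Hom A B -> Hom A C;
  comp_assoc : forall A B C D (h : Hom C D) (g : Hom B C) (f : Hom A B),
      comp _ _ _ h (comp _ _ _ g f) = comp _ _ _ (comp _ _ _ h g) f;
  comp_id_l : forall A B (f : Hom A B), comp _ _ _ (idm B) f = f;
  comp_id_r : forall A B (f : Hom A B), comp _ _ _ f (idm A) = f
}.
Arguments Hom C A B : rename.
Arguments idm C A : rename.
Arguments comp C {A B D} g f : rename.

Definition is_mono (C : Category) {A B : Obj C} (m : Hom C A B) : Prop :=
  forall (Z : Obj C) (g h : Hom C Z A), comp C m g = comp C m h -> g = h.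

Definition is_pullback (C : Category) {P B Cc D : Obj C}
  (p : Hom C P B) (q : Hom C P Cc) (f : Hom C B D) (g : Hom C Cc D) : Prop :=
  comp C f p = comp C g q /\
  forall (X : Obj C) (x : Hom C X B) (y : Hom C X Cc),
    comp C f x = comp C g y ->
    exists! u : Hom C X P, comp C p u = x /\ comp C q u = y.

Definition is_pushout (C : Category) {A B Cc D : Obj C}
  (m : Hom C A B) (f : Hom C A Cc) (g : Hom C B D) (n : Hom C Cc D) : Prop :=
  comp C g m = comp C n f /\
  forall (X : Obj C) (x : Hom C B X) (y : Hom C Cc X),
    comp C x m = comp C y f ->
    exists! u : Hom C D X, comp C u g = x /\ comp C u n = y.

Record M_adhesive (C : Category) (M : forall A B : Obj C, Hom C A B -> Prop)
  : Prop := {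
  M_mono : forall A B (m : Hom C A B), M A B m -> is_mono C m;
  M_id : forall A, M A A (idm C A);
  M_comp : forall A B D (g : Hom C B D) (f : Hom C A B),
      M A B f -> M B D g -> M A D (comp C g f);
  M_pushout_exists : forall A B Cc (m : Hom C A B) (f : Hom C A Cc),
      M A B m ->
      exists (D : Obj C) (g : Hom C B D) (n : Hom C Cc D), is_pushout C m f g n;
  M_pullback_exists : forall B Cc D (f : Hom C B D) (g : Hom C Cc D),
      M B D f \/ M Cc D g ->
      exists (P : Obj C) (p : Hom C P B) (q : Hom C P Cc), is_pullback C p q f g;
  M_pushout_stable : forall A B Cc D (m : Hom C A B) (f : Hom C A Cc)
      (g : Hom C B D) (n : Hom C Cc D),
      is_pushout C m f g n -> M A B m -> M Cc D n;
  M_pullback_stable : forall P B Cc D (p : Hom C P B) (q : Hom C P Cc)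
      (f : Hom C B D) (g : Hom C Cc D),
      is_pullback C p q f g -> M B D f -> M P Cc q;
  M_vertical_weak_VK :
    forall (A B Cc D A' B' C' D' : Obj C)
      (m : Hom C A B) (f : Hom C A Cc) (g : Hom C B D) (n : Hom C Cc D)
      (m' : Hom C A' B') (f' : Hom C A' C') (g' : Hom C B' D') (n' : Hom C C' D')
      (a : Hom C A' A) (b : Hom C B' B) (c : Hom C C' Cc) (d : Hom C D' D),
      is_pushout C m f g n -> M A B m ->
      comp C g' m' = comp C n' f' ->
      comp C m a = comp C b m' -> comp C f a = comp C c f' ->
      comp C g b = comp C d g' -> comp C n c = comp C d n' ->
      is_pullback C m' a b m -> is_pullback C f' a c f ->
      M A' A a -> M B' B b -> M C' Cc c -> M D' D d ->
      (is_pushout C m' f' g' n' <->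
         (is_pullback C g' b d g /\ is_pullback C n' c d n))
}.

Record Functor (C D : Category) : Type := {
  Fobj : Obj C -> Obj D;
  Fmap : forall A B, Hom C A B -> Hom D (Fobj A) (Fobj B);
  Fmap_id : forall A, Fmap A A (idm C A) = idm D (Fobj A);
  Fmap_comp : forall A B E (g : Hom C B E) (f : Hom C A B),
      Fmap A E (comp C g f) = comp D (Fmap B E g) (Fmap A B f)
}.
Arguments Fobj {C D} F A : rename.
Arguments Fmap {C D} F {A B} f : rename.

Definition SetsCat : Category :=
  {| Obj := Type;
     Hom := fun A B => A -> B;
     idm := fun A (x : A) => x;
     comp := fun A B C (g : B -> C) (f : A -> B) (x : A) => g (f x);
     comp_assoc := fun _ _ _ _ _ _ _ => eq_refl;
     comp_id_l := fun _ _ _ => eq_refl;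
     comp_id_r := fun _ _ _ => eq_refl |}.

Definition injective {A B : Type} (f : A -> B) : Prop :=
  forall x y, f x = f y -> x = y.

Definition preserves_pullbacks_along_injective (F : Functor SetsCat SetsCat)
  : Prop :=
  forall (P B Cc D : Obj SetsCat) (p : Hom SetsCat P B) (q : Hom SetsCat P Cc)
    (f : Hom SetsCat B D) (g : Hom SetsCat Cc D),
    is_pullback SetsCat p q f g ->
    (injective f \/ injective g) ->
    is_pullback SetsCat (Fmap F p) (Fmap F q) (Fmap F f) (Fmap F g).

Section Coalg.
Variable F : Functor SetsCat SetsCat.

Record coalg : Type := {
  carrier : Obj SetsCat;
  str : Hom SetsCat carrier (Fobj F carrier)
}.

Definition is_coalg_hom (M N : coalg) (f : Hom SetsCat (carrier M) (carrier N))
  : Prop :=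
  comp SetsCat (Fmap F f) (str M) = comp SetsCat (str N) f.

Definition coalg_hom (M N : coalg) : Type :=
  { f : Hom SetsCat (carrier M) (carrier N) | is_coalg_hom M N f }.

Lemma coalg_hom_eq (M N : coalg) (f g : coalg_hom M N) :
  proj1_sig f = proj1_sig g -> f = g.
Proof.
  destruct f as [f hf], g as [g hg]; simpl; intros ->.
  f_equal; apply proof_irrelevance.
Qed.

Lemma coalg_id_hom (M : coalg) : is_coalg_hom M M (idm SetsCat (carrier M)).
Proof. unfold is_coalg_hom. rewrite Fmap_id. reflexivity. Qed.

Lemma coalg_comp_hom (M N K : coalg) (g : coalg_hom N K) (f : coalg_hom M N) :
  is_coalg_hom M K (comp SetsCat (proj1_sig g) (proj1_sig f)).
Proof.
  destruct f as [f hf], g as [g hg]; unfold is_coalg_hom in *; cbv beta iota delta [proj1_sig].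
  rewrite Fmap_comp.
  apply functional_extensionality; intro x.
  pose proof (f_equal (fun h => h x) hf) as hfx.
  pose proof (f_equal (fun h => h (f x)) hg) as hgx.
  simpl in *. rewrite hfx. exact hgx.
Qed.

Definition coalg_idm (M : coalg) : coalg_hom M M :=
  exist _ _ (coalg_id_hom M).

Definition coalg_comp (M N K : coalg) (g : coalg_hom N K) (f : coalg_hom M N)
  : coalg_hom M K := exist _ _ (coalg_comp_hom M N K g f).

Lemma coalg_comp_assoc (A B C D : coalg) (h : coalg_hom C D)
  (g : coalg_hom B C) (f : coalg_hom A B) :
  coalg_comp A C D h (coalg_comp A B C g f) = coalg_comp A B D (coalg_comp B C D h g) f.
Proof. apply coalg_hom_eq; reflexivity. Qed.

Lemma coalg_comp_id_l (A B : coalg) (f : coalg_hom A B) :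
  coalg_comp A B B (coalg_idm B) f = f.
Proof. apply coalg_hom_eq; reflexivity. Qed.

Lemma coalg_comp_id_r (A B : coalg) (f : coalg_hom A B) :
  coalg_comp A A B f (coalg_idm A) = f.
Proof. apply coalg_hom_eq; reflexivity. Qed.

Definition CoalgCat : Category :=
  {| Obj := coalg; Hom := coalg_hom; idm := coalg_idm; comp := coalg_comp;
     comp_assoc := coalg_comp_assoc; comp_id_l := coalg_comp_id_l;
     comp_id_r := coalg_comp_id_r |}.

Definition M_F : forall A B : Obj CoalgCat, Hom CoalgCat A B -> Prop :=
  fun A B h => injective (proj1_sig h).

End Coalg.

(* Main.v *)
Require Import Defs.
From Stdlib Require Import ProofIrrelevance FunctionalExtensionality ClassicalEpsilon Classical.

Definition dec (P : Prop) : bool :=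
  if excluded_middle_informative P then true else false.

Lemma decT (P : Prop) : dec P = true <-> P.
Proof. unfold dec; destruct (excluded_middle_informative P); split; intuition congruence. Qed.

Lemma dec_iff (P Q : Prop) : (P <-> Q) -> dec P = dec Q.
Proof.
  intro H; unfold dec; destruct (excluded_middle_informative P), (excluded_middle_informative Q);
  tauto.
Qed.

Definition spo {A B C D : Type} (m : A -> B) (f : A -> C) (g : B -> D) (n : C -> D) : Prop :=
  (forall a, g (m a) = n (f a)) /\
  (forall d, (exists b, g b = d) \/ (exists c, n c = d)) /\
  (forall b1 b2, g b1 = g b2 -> b1 = b2 \/ exists a1 a2, b1 = m a1 /\ b2 = m a2 /\ f a1 = f a2) /\
  (forall c1 c2, n c1 = n c2 -> c1 = c2) /\
  (forall b c, g b = n c -> exists a, b = m a /\ c = f a).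

Definition spb {P B C D : Type} (p : P -> B) (q : P -> C) (f : B -> D) (g : C -> D) : Prop :=
  (forall x, f (p x) = g (q x)) /\
  (forall b c, f b = g c -> exists x, p x = b /\ q x = c) /\
  (forall x y, p x = p y -> q x = q y -> x = y).

Lemma po_test {A B C D : Obj SetsCat} (m : A -> B) (f : A -> C) (g : B -> D) (n : C -> D)
  (H : is_pushout SetsCat m f g n) (x : B -> bool) (y : C -> bool) :
  (forall a, x (m a) = y (f a)) ->
  exists u : D -> bool, (forall b, u (g b) = x b) /\ (forall c, u (n c) = y c).
Proof.
  intro Hxy. destruct H as [_ H].
  destruct (H bool x y) as [u [[H1 H2] _]].
  { apply functional_extensionality; exact Hxy. }
  exists u; split; intro z; [exact (f_equal (fun h => h z) H1) | exact (f_equal (fun h => h z) H2)].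
Qed.

Lemma po_uniq {A B C D : Obj SetsCat} (m : A -> B) (f : A -> C) (g : B -> D) (n : C -> D)
  (H : is_pushout SetsCat m f g n) (u1 u2 : D -> bool) :
  (forall b, u1 (g b) = u2 (g b)) -> (forall c, u1 (n c) = u2 (n c)) -> u1 = u2.
Proof.
  intros E1 E2. destruct H as [H0 H].
  destruct (H bool (fun b => u1 (g b)) (fun c => u1 (n c))) as [u [_ Hu]].
  { apply functional_extensionality; intro a.
    exact (f_equal (fun h => u1 (h a)) H0). }
  transitivity u; [symmetry|]; apply Hu; split; apply functional_extensionality; intro z; simpl; auto.
Qed.

Lemma po_spo {A B C D : Obj SetsCat} (m : A -> B) (f : A -> C) (g : B -> D) (n : C -> D) :
  is_pushout SetsCat m f g n -> injective m -> spo m f g n.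
Proof.
  intros H Hm.
  assert (Hc : forall a, g (m a) = n (f a)).
  { intro a; exact (f_equal (fun h => h a) (proj1 H)). }
  assert (Him : forall b1 b2, g b1 = g b2 -> b1 <> b2 -> exists a, m a = b1).
  { intros b1 b2 E N. apply NNPP; intro Nim.
    destruct (po_test m f g n H (fun b => dec (b = b1)) (fun _ => false)) as [u [U1 U2]].
    { intro a. apply Bool.not_true_iff_false. rewrite decT. intro; apply Nim; eauto. }
    pose proof (U1 b1) as X1. pose proof (U1 b2) as X2. rewrite E in X1. rewrite X1 in X2.
    assert (dec (b1 = b1) = true) by (apply decT; auto). rewrite H0 in X2.
    symmetry in X2. apply (proj1 (decT _)) in X2. congruence. }
  split; [exact Hc|]. split; [|split; [|split]].
  - intro d.
    assert (E := po_uniq m f g n H (fun _ => true)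
       (fun d => dec ((exists b, g b = d) \/ (exists c, n c = d)))).
    assert (E' : (fun _ : D => true) = (fun d => dec ((exists b, g b = d) \/ (exists c, n c = d)))).
    { apply E; intros; symmetry; apply decT; eauto. }
    apply (decT _). exact (eq_sym (f_equal (fun h => h d) E')).
  - intros b1 b2 E. destruct (classic (b1 = b2)) as [|N]; [left; auto|right].
    destruct (Him b1 b2 E N) as [a1 Ha1]. destruct (Him b2 b1 (eq_sym E) (not_eq_sym N)) as [a2 Ha2].
    exists a1, a2. split; [auto|split; [auto|]]. subst.
    destruct (po_test m f g n H (fun b => dec (exists a, m a = b /\ f a = f a1))
                (fun c => dec (c = f a1))) as [u [U1 U2]].
    { intro a. apply dec_iff. split.
      - intros [a' [e1 e2]]. apply Hm in e1. subst; auto.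
      - intro e; eauto. }
    pose proof (U1 (m a1)) as X1. pose proof (U1 (m a2)) as X2. rewrite E in X1. rewrite X1 in X2.
    assert (dec (exists a, m a = m a1 /\ f a = f a1) = true) by (apply decT; eauto).
    rewrite H0 in X2. symmetry in X2. apply (proj1 (decT _)) in X2. destruct X2 as [a' [e1 e2]].
    apply Hm in e1. subst. auto.
  - intros c1 c2 E.
    destruct (po_test m f g n H (fun b => dec (exists a, m a = b /\ f a = c1))
                (fun c => dec (c = c1))) as [u [U1 U2]].
    { intro a. apply dec_iff. split.
      - intros [a' [e1 e2]]. apply Hm in e1. subst; auto.
      - intro e; eauto. }
    pose proof (U2 c1) as X1. pose proof (U2 c2) as X2. rewrite E in X1. rewrite X1 in X2.
    assert (dec (c1 = c1) = true) by (apply decT; eauto).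
    rewrite H0 in X2. symmetry in X2. apply (proj1 (decT _)) in X2. auto.
  - intros b c E.
    destruct (po_test m f g n H (fun b' => dec (exists a, m a = b' /\ f a = c))
                (fun c' => dec (c' = c))) as [u [U1 U2]].
    { intro a. apply dec_iff. split.
      - intros [a' [e1 e2]]. apply Hm in e1. subst; auto.
      - intro e; eauto. }
    pose proof (U1 b) as X1. pose proof (U2 c) as X2. rewrite E in X1. rewrite X1 in X2.
    assert (dec (c = c) = true) by (apply decT; eauto).
    rewrite H0 in X2. apply (proj1 (decT _)) in X2. destruct X2 as [a [e1 e2]]. eauto.
Qed.

Lemma choose_sum {B C D : Type} (g : B -> D) (n : C -> D) :
  (forall d, (exists b, g b = d) \/ (exists c, n c = d)) ->
  forall d, ({b | g b = d} + {c | n c = d})%type.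
Proof.
  intros J d. destruct (excluded_middle_informative (exists b, g b = d)) as [h|h].
  - left. exact (constructive_indefinite_description _ h).
  - right. apply constructive_indefinite_description. destruct (J d); tauto.
Defined.

Lemma spo_po {A B C D : Obj SetsCat} (m : A -> B) (f : A -> C) (g : B -> D) (n : C -> D) :
  spo m f g n -> is_pushout SetsCat m f g n.
Proof.
  intros [Hc [J [Egg [Enn Egn]]]]. split.
  - apply functional_extensionality; exact Hc.
  - intros X x y Hxy. simpl in *.
    assert (hxy : forall a, x (m a) = y (f a)) by (intro a; exact (f_equal (fun h => h a) Hxy)).
    pose (u := fun d => match choose_sum g n J d with
                        | inl (exist _ b _) => x b | inr (exist _ c _) => y c end).
    assert (Ug : forall b, u (g b) = x b).
    { intro b. unfold u. destruct (choose_sum g n J (g b)) as [[b' e]|[c' e]].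
      - destruct (Egg _ _ e) as [->|[a1 [a2 [-> [-> e']]]]]; auto.
        rewrite !hxy, e'. auto.
      - destruct (Egn _ _ (eq_sym e)) as [a [-> ->]]. rewrite hxy. auto. }
    assert (Un : forall c, u (n c) = y c).
    { intro c. unfold u. destruct (choose_sum g n J (n c)) as [[b' e]|[c' e]].
      - destruct (Egn _ _ e) as [a [-> ->]]. rewrite hxy. auto.
      - apply Enn in e. subst; auto. }
    exists u. split.
    + split; apply functional_extensionality; auto.
    + intros u' [H1 H2]. apply functional_extensionality; intro d.
      destruct (J d) as [[b <-]|[c <-]].
      * rewrite Ug. exact (eq_sym (f_equal (fun h => h b) H1)).
      * rewrite Un. exact (eq_sym (f_equal (fun h => h c) H2)).
Qed.

Lemma pb_spb {P B C D : Obj SetsCat} (p : P -> B) (q : P -> C) (f : B -> D) (g : C -> D) :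
  is_pullback SetsCat p q f g <-> spb p q f g.
Proof.
  split.
  - intros [H0 H]. split; [|split].
    + intro x; exact (f_equal (fun h => h x) H0).
    + intros b c E. destruct (H unit (fun _ => b) (fun _ => c)) as [u [[H1 H2] _]].
      { apply functional_extensionality; intros; exact E. }
      exists (u tt). split; [exact (f_equal (fun h => h tt) H1) | exact (f_equal (fun h => h tt) H2)].
    + intros x y E1 E2.
      destruct (H unit (fun _ => p x) (fun _ => q x)) as [u [_ Hu]].
      { apply functional_extensionality; intros; exact (f_equal (fun h => h x) H0). }
      assert (e1 : u = fun _ => x) by (apply Hu; split; reflexivity).
      assert (e2 : u = fun _ => y) by (apply Hu; simpl; split; apply functional_extensionality; auto).
      rewrite e1 in e2. exact (f_equal (fun h => h tt) e2).
  - intros [Hc [Ex Jm]]. split.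
    + apply functional_extensionality; exact Hc.
    + intros X x y Hxy. simpl in *.
      assert (hxy : forall z, f (x z) = g (y z)) by (intro z; exact (f_equal (fun h => h z) Hxy)).
      pose (u := fun z => proj1_sig (constructive_indefinite_description _ (Ex _ _ (hxy z)))).
      assert (Hu : forall z, p (u z) = x z /\ q (u z) = y z)
        by (intro z; exact (proj2_sig (constructive_indefinite_description _ (Ex _ _ (hxy z))))).
      exists u. split.
      * split; apply functional_extensionality; intro z; apply Hu.
      * intros u' [H1 H2]. apply functional_extensionality; intro z. apply Jm.
        -- rewrite (proj1 (Hu z)). exact (eq_sym (f_equal (fun h => h z) H1)).
        -- rewrite (proj2 (Hu z)). exact (eq_sym (f_equal (fun h => h z) H2)).
Qed.

Lemma spo_transfer {A B C D D0 : Type} (m : A -> B) (f : A -> C) (g : B -> D) (n : C -> D)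
  (phi : D -> D0) (g0 : B -> D0) (n0 : C -> D0) :
  (forall b, phi (g b) = g0 b) -> (forall c, phi (n c) = n0 c) -> injective phi ->
  (forall a, g (m a) = n (f a)) -> spo m f g0 n0 -> spo m f g n.
Proof.
  intros Eg En Hphi Hc [_ [J [Egg [Enn Egn]]]].
  split; [exact Hc|]. split; [|split; [|split]].
  - intro d. destruct (J (phi d)) as [[b e]|[c e]].
    + left; exists b. apply Hphi. rewrite Eg; auto.
    + right; exists c. apply Hphi. rewrite En; auto.
  - intros b1 b2 e. apply Egg. rewrite <- !Eg, e. auto.
  - intros c1 c2 e. apply Enn. rewrite <- !En, e. auto.
  - intros b c e. apply Egn. rewrite <- Eg, <- En, e. auto.
Qed.

Lemma VK_sets {A B C D A' B' C' D' : Type} (m : A -> B) (f : A -> C) (g : B -> D) (n : C -> D)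
  (m' : A' -> B') (f' : A' -> C') (g' : B' -> D') (n' : C' -> D')
  (a : A' -> A) (b : B' -> B) (c : C' -> C) (d : D' -> D) :
  spo m f g n -> injective m ->
  (forall x, g' (m' x) = n' (f' x)) -> (forall x, m (a x) = b (m' x)) ->
  (forall x, f (a x) = c (f' x)) -> (forall x, g (b x) = d (g' x)) ->
  (forall x, n (c x) = d (n' x)) ->
  spb m' a b m -> spb f' a c f ->
  injective a -> injective b -> injective c -> injective d ->
  ((forall x, (exists y, g' y = x) \/ (exists z, n' z = x)) -> spb g' b d g /\ spb n' c d n) /\
  (spb g' b d g -> spb n' c d n -> spo m' f' g' n').
Proof.
  intros [Hc [J [Egg [Enn Egn]]]] Hm Hc' Ema Efa Egb Enc
    [_ [Pm _]] [_ [Pf _]] Ia Ib Ic Id.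
  split.
  - intro J'. split; split; [intro; symmetry; auto| |intro; symmetry; auto| ].
    + split; [|intros x y _ e; apply Ib; auto].
      intros d' b0 E. destruct (J' d') as [[b'' <-]|[c' <-]].
      * rewrite <- Egb in E. destruct (Egg _ _ E) as [<-|[a1 [a2 [e1 [e2 e3]]]]].
        -- exists b''; auto.
        -- destruct (Pm b'' a1 e1) as [x [ex1 ex2]].
           assert (c (f' x) = f a2) by (rewrite <- Efa, ex2; auto).
           destruct (Pf (f' x) a2 H) as [x' [ex3 ex4]].
           exists (m' x'). split.
           ++ rewrite Hc', ex3, <- Hc', ex1. auto.
           ++ rewrite <- Ema, ex4; auto.
      * rewrite <- Enc in E. destruct (Egn _ _ (eq_sym E)) as [a0 [e1 e2]].
        destruct (Pf c' a0 e2) as [x [ex1 ex2]].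
        exists (m' x). split.
        -- rewrite Hc', ex1; auto.
        -- rewrite <- Ema, ex2; auto.
    + split; [|intros x y _ e; apply Ic; auto].
      intros d' c0 E. destruct (J' d') as [[b'' <-]|[c' <-]].
      * rewrite <- Egb in E. destruct (Egn _ _ E) as [a0 [e1 e2]].
        destruct (Pm b'' a0 e1) as [x [ex1 ex2]].
        exists (f' x). split.
        -- rewrite <- Hc', ex1; auto.
        -- rewrite <- Efa, ex2; auto.
      * rewrite <- Enc in E. apply Enn in E. subst. exists c'; auto.
  - intros [_ [Pg _]] [_ [Pn _]].
    split; [exact Hc'|]. split; [|split; [|split]].
    + intro d'. destruct (J (d d')) as [[b0 e]|[c0 e]].
      * destruct (Pg d' b0 (eq_sym e)) as [x [ex _]]. left; eauto.
      * destruct (Pn d' c0 (eq_sym e)) as [x [ex _]]. right; eauto.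
    + intros b1 b2 E. assert (E' : g (b b1) = g (b b2)) by (rewrite !Egb, E; auto).
      destruct (Egg _ _ E') as [e|[a1 [a2 [e1 [e2 e3]]]]]; [left; apply Ib; auto|right].
      destruct (Pm b1 a1 e1) as [x1 [ex1 ex1']]. destruct (Pm b2 a2 e2) as [x2 [ex2 ex2']].
      exists x1, x2. split; [auto|split; [auto|]].
      apply Ic. rewrite <- !Efa, ex1', ex2'. auto.
    + intros c1 c2 E. apply Ic, Enn. rewrite !Enc, E. auto.
    + intros b1 c1 E. assert (E' : g (b b1) = n (c c1)) by (rewrite Egb, Enc, E; auto).
      destruct (Egn _ _ E') as [a0 [e1 e2]].
      destruct (Pm b1 a0 e1) as [x [ex1 ex2]]. exists x. split; [auto|].
      apply Ic. rewrite <- Efa, ex2. auto.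
Qed.

Lemma Fcomp (F : Functor SetsCat SetsCat) {A B E : Obj SetsCat} (g : B -> E) (f : A -> B) y :
  Fmap F (fun x => g (f x)) y = Fmap F g (Fmap F f y).
Proof. exact (f_equal (fun h => h y) (Fmap_comp _ _ F A B E g f)). Qed.

Lemma Fext (F : Functor SetsCat SetsCat) {A B : Obj SetsCat} (f g : A -> B) y :
  (forall x, f x = g x) -> Fmap F f y = Fmap F g y.
Proof. intro H. assert (f = g) by (apply functional_extensionality; auto). subst; auto. Qed.

Lemma hom_pt (F : Functor SetsCat SetsCat) (X Y : coalg F) (h : coalg_hom F X Y) z :
  Fmap F (proj1_sig h) (str F X z) = str F Y (proj1_sig h z).
Proof. exact (f_equal (fun k => k z) (proj2_sig h)). Qed.

Lemma ceq (F : Functor SetsCat SetsCat) {X Y Z W : coalg F} (g : coalg_hom F Y Z)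
  (f : coalg_hom F X Y) (g' : coalg_hom F W Z) (f' : coalg_hom F X W) :
  @comp (CoalgCat F) X Y Z g f = @comp (CoalgCat F) X W Z g' f' <->
  forall x, proj1_sig g (proj1_sig f x) = proj1_sig g' (proj1_sig f' x).
Proof.
  split.
  - intros E x. exact (f_equal (fun k => proj1_sig k x) E).
  - intro E. apply coalg_hom_eq. simpl. apply functional_extensionality. exact E.
Qed.

Lemma ceq1 (F : Functor SetsCat SetsCat) {X Y Z : coalg F} (g : coalg_hom F Y Z)
  (f : coalg_hom F X Y) (h : coalg_hom F X Z) :
  @comp (CoalgCat F) X Y Z g f = h <->
  forall x, proj1_sig g (proj1_sig f x) = proj1_sig h x.
Proof.
  split.
  - intros E x. exact (f_equal (fun k => proj1_sig k x) E).
  - intro E. apply coalg_hom_eq. simpl. apply functional_extensionality. exact E.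
Qed.

Lemma heq (F : Functor SetsCat SetsCat) {X Y : coalg F} (h k : coalg_hom F X Y) :
  h = k <-> forall x, proj1_sig h x = proj1_sig k x.
Proof.
  split.
  - intros E x. subst; auto.
  - intro E. apply coalg_hom_eq. apply functional_extensionality. exact E.
Qed.


Ltac ceqin H := let H' := fresh in pose proof (proj1 (ceq _ _ _ _ _) H) as H'; clear H; rename H' into H.
Ltac ceq1in H := let H' := fresh in pose proof (proj1 (ceq1 _ _ _ _) H) as H'; clear H; rename H' into H.

Lemma C1 (F : Functor SetsCat SetsCat) (A B C D : coalg F) (m : coalg_hom F A B)
  (f : coalg_hom F A C) (g : coalg_hom F B D) (n : coalg_hom F C D) :
  spo (proj1_sig m) (proj1_sig f) (proj1_sig g) (proj1_sig n) ->
  @is_pushout (CoalgCat F) A B C D m f g n.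
Proof.
  intro S. pose proof (spo_po _ _ _ _ S) as [_ HP].
  destruct S as [Hc [J _]].
  split.
  - apply ceq. exact Hc.
  - intros X x y Hxy. ceqin Hxy.
    destruct (HP (carrier F X) (proj1_sig x) (proj1_sig y)) as [u [[U1 U2] Uu]].
    { apply functional_extensionality; exact Hxy. }
    assert (u1 : forall b, u (proj1_sig g b) = proj1_sig x b) by (intro b; exact (f_equal (fun k => k b) U1)).
    assert (u2 : forall c, u (proj1_sig n c) = proj1_sig y c) by (intro c; exact (f_equal (fun k => k c) U2)).
    assert (Hu : is_coalg_hom F D X u).
    { unfold is_coalg_hom. apply functional_extensionality. intro z. simpl.
      destruct (J z) as [[b <-]|[c <-]].
      - rewrite <- hom_pt, <- Fcomp, (Fext F _ (proj1_sig x)), hom_pt, u1; auto.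
      - rewrite <- hom_pt, <- Fcomp, (Fext F _ (proj1_sig y)), hom_pt, u2; auto. }
    exists (exist _ u Hu). split.
    + split; apply ceq1; simpl; auto.
    + intros u' [H1 H2]. ceq1in H1. ceq1in H2.
      apply heq. intro z. simpl.
      assert (E : u = proj1_sig u').
      { apply Uu. split; apply functional_extensionality; intro; simpl; auto. }
      rewrite E; auto.
Qed.

Definition poD (F : Functor SetsCat SetsCat) (A B C : coalg F) (m : coalg_hom F A B) : Obj SetsCat :=
  ({b : carrier F B | ~ exists a, proj1_sig m a = b} + carrier F C)%type.

Definition poG (F : Functor SetsCat SetsCat) (A B C : coalg F) (m : coalg_hom F A B)
  (f : coalg_hom F A C) (b : carrier F B) : poD F A B C m :=
  match excluded_middle_informative (exists a, proj1_sig m a = b) with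
  | left h => inr (proj1_sig f (proj1_sig (constructive_indefinite_description _ h)))
  | right h => inl (exist _ b h)
  end.

Lemma poG_cases (F : Functor SetsCat SetsCat) (A B C : coalg F) (m : coalg_hom F A B)
  (f : coalg_hom F A C) b :
  (exists a, proj1_sig m a = b /\ poG F A B C m f b = inr (proj1_sig f a)) \/
  (exists h, poG F A B C m f b = inl (exist _ b h)).
Proof.
  unfold poG. destruct (excluded_middle_informative (exists a, proj1_sig m a = b)) as [h|h].
  - left. destruct (constructive_indefinite_description _ h) as [a e]. simpl. eauto.
  - right. eauto.
Qed.

Definition poStr (F : Functor SetsCat SetsCat) (A B C : coalg F) (m : coalg_hom F A B)
  (f : coalg_hom F A C) (z : poD F A B C m) : Fobj F (poD F A B C m) :=
  match z with
  | inl (exist _ b _) => Fmap F (poG F A B C m f) (str F B b)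
  | inr c => Fmap F (fun c => inr c : poD F A B C m) (str F C c)
  end.

Lemma po_exists (F : Functor SetsCat SetsCat) (A B C : coalg F) (m : coalg_hom F A B)
  (f : coalg_hom F A C) : injective (proj1_sig m) ->
  exists (D : coalg F) (g : coalg_hom F B D) (n : coalg_hom F C D),
    @is_pushout (CoalgCat F) A B C D m f g n /\
    spo (proj1_sig m) (proj1_sig f) (proj1_sig g) (proj1_sig n).
Proof.
  intro Hm.
  pose (G := poG F A B C m f).
  pose (N := fun c => inr c : poD F A B C m).
  assert (S : spo (proj1_sig m) (proj1_sig f) G N).
  { split; [|split; [|split; [|split]]].
    - intro a. unfold G. destruct (poG_cases F A B C m f (proj1_sig m a)) as [[a' [e1 e2]]|[h e]].
      + apply Hm in e1. subst. rewrite e2. auto.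
      + exfalso; apply h; eauto.
    - intros [[b h]|c].
      + left. exists b. unfold G. destruct (poG_cases F A B C m f b) as [[a' [e1 e2]]|[h' e]].
        * exfalso; apply h; eauto.
        * rewrite e. repeat f_equal. apply proof_irrelevance.
      + right. exists c. auto.
    - intros b1 b2 E. unfold G in E.
      destruct (poG_cases F A B C m f b1) as [[a1 [e1 e2]]|[h1 e1]];
      destruct (poG_cases F A B C m f b2) as [[a2 [e3 e4]]|[h2 e3]];
      rewrite ?e2, ?e4, ?e1, ?e3 in E; try discriminate.
      + right. exists a1, a2. split; [auto|split; [auto|]]. congruence.
      + left. injection E. auto.
    - intros c1 c2 E. unfold N in E. congruence.
    - intros b c E. unfold G, N in E.
      destruct (poG_cases F A B C m f b) as [[a1 [e1 e2]]|[h1 e1]]; rewrite ?e2, ?e1 in E; try discriminate.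
      exists a1. split; congruence. }
  pose (Dc := {| carrier := poD F A B C m; str := poStr F A B C m f |}).
  assert (HG : is_coalg_hom F B Dc G).
  { unfold is_coalg_hom. apply functional_extensionality. intro b. simpl.
    destruct (poG_cases F A B C m f b) as [[a [e1 e2]]|[h e]].
    - unfold G; rewrite e2. simpl. subst b.
      rewrite <- hom_pt, <- (hom_pt F A C f), <- !Fcomp. apply Fext. intro x.
      exact (proj1 S x).
    - unfold G; rewrite e. simpl. reflexivity. }
  assert (HN : is_coalg_hom F C Dc N).
  { unfold is_coalg_hom. apply functional_extensionality. intro c. reflexivity. }
  exists Dc, (exist _ G HG), (exist _ N HN).
  split; [apply C1|]; exact S.
Qed.

Lemma C2 (F : Functor SetsCat SetsCat) (A B C D : coalg F) (m : coalg_hom F A B)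
  (f : coalg_hom F A C) (g : coalg_hom F B D) (n : coalg_hom F C D) :
  @is_pushout (CoalgCat F) A B C D m f g n -> injective (proj1_sig m) ->
  spo (proj1_sig m) (proj1_sig f) (proj1_sig g) (proj1_sig n).
Proof.
  intros H Hm.
  destruct (po_exists F A B C m f Hm) as [D0 [g0 [n0 [H0 S0]]]].
  destruct (proj2 H D0 g0 n0 (proj1 H0)) as [phi [[P1 P2] _]].
  destruct (proj2 H0 D g n (proj1 H)) as [psi [[Q1 Q2] _]].
  destruct (proj2 H D g n (proj1 H)) as [w [_ Wu]].
  assert (E1 : w = @comp (CoalgCat F) _ _ _ psi phi).
  { apply Wu. split.
    - rewrite <- comp_assoc, P1. exact Q1.
    - rewrite <- comp_assoc, P2. exact Q2. }
  assert (E2 : w = idm (CoalgCat F) D).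
  { apply Wu. split; apply comp_id_l. }
  rewrite E1 in E2.
  ceq1in P1. ceq1in P2.
  apply (spo_transfer _ _ _ _ (proj1_sig phi) (proj1_sig g0) (proj1_sig n0)); auto.
  - intros x y e. pose proof (f_equal (fun k => proj1_sig k x) E2) as ex.
    pose proof (f_equal (fun k => proj1_sig k y) E2) as ey. simpl in ex, ey.
    rewrite <- ex, <- ey. f_equal. exact e.
  - apply ceq. exact (proj1 H).
Qed.

Lemma spbF (F : Functor SetsCat SetsCat) (Hp : preserves_pullbacks_along_injective F)
  {P B C D : Obj SetsCat} (p : P -> B) (q : P -> C) (f : B -> D) (g : C -> D) :
  spb p q f g -> injective f \/ injective g ->
  spb (Fmap F p) (Fmap F q) (Fmap F f) (Fmap F g).
Proof.
  intros S I. apply (proj1 (pb_spb _ _ _ _)). apply Hp; auto. apply pb_spb; auto.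
Qed.

Lemma C3 (F : Functor SetsCat SetsCat) (Hp : preserves_pullbacks_along_injective F)
  (P B C D : coalg F) (p : coalg_hom F P B)
  (q : coalg_hom F P C) (f : coalg_hom F B D) (g : coalg_hom F C D) :
  spb (proj1_sig p) (proj1_sig q) (proj1_sig f) (proj1_sig g) ->
  injective (proj1_sig f) \/ injective (proj1_sig g) ->
  @is_pullback (CoalgCat F) P B C D p q f g.
Proof.
  intros S I. pose proof (spbF F Hp _ _ _ _ S I) as [_ [_ JF]].
  destruct S as [Hc [Ex Jm]].
  split.
  - apply ceq. exact Hc.
  - intros X x y Hxy. ceqin Hxy.
    pose (u := fun z => proj1_sig (constructive_indefinite_description _ (Ex _ _ (Hxy z)))).
    assert (Hu : forall z, proj1_sig p (u z) = proj1_sig x z /\ proj1_sig q (u z) = proj1_sig y z)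
      by (intro z; exact (proj2_sig (constructive_indefinite_description _ (Ex _ _ (Hxy z))))).
    assert (Hh : is_coalg_hom F X P u).
    { unfold is_coalg_hom. apply functional_extensionality. intro z. simpl.
      apply JF.
      - rewrite <- Fcomp, (Fext F _ (proj1_sig x)), hom_pt, hom_pt, (proj1 (Hu z)); auto.
        intro; apply Hu.
      - rewrite <- Fcomp, (Fext F _ (proj1_sig y)), hom_pt, hom_pt, (proj2 (Hu z)); auto.
        intro; apply Hu. }
    exists (exist _ u Hh). split.
    + split; apply ceq1; simpl; apply Hu.
    + intros u' [H1 H2]. ceq1in H1. ceq1in H2.
      apply heq. intro z. simpl. apply Jm.
      * rewrite (proj1 (Hu z)). auto.
      * rewrite (proj2 (Hu z)). auto.
Qed.

Definition pbP (F : Functor SetsCat SetsCat) (B C D : coalg F) (f : coalg_hom F B D)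
  (g : coalg_hom F C D) : Obj SetsCat :=
  {bc : carrier F B * carrier F C | proj1_sig f (fst bc) = proj1_sig g (snd bc)}.

Lemma pb_exists (F : Functor SetsCat SetsCat) (Hp : preserves_pullbacks_along_injective F)
  (B C D : coalg F) (f : coalg_hom F B D) (g : coalg_hom F C D) :
  injective (proj1_sig f) \/ injective (proj1_sig g) ->
  exists (P : coalg F) (p : coalg_hom F P B) (q : coalg_hom F P C),
    @is_pullback (CoalgCat F) P B C D p q f g /\
    spb (proj1_sig p) (proj1_sig q) (proj1_sig f) (proj1_sig g).
Proof.
  intro I.
  pose (p0 := fun z : pbP F B C D f g => fst (proj1_sig z)).
  pose (q0 := fun z : pbP F B C D f g => snd (proj1_sig z)).
  assert (S : spb p0 q0 (proj1_sig f) (proj1_sig g)).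
  { split; [|split].
    - intro z. exact (proj2_sig z).
    - intros b c e. exists (exist _ (b, c) e). auto.
    - intros [[b1 c1] e1] [[b2 c2] e2]. unfold p0, q0; simpl. intros -> ->.
      f_equal. apply proof_irrelevance. }
  pose proof (spbF F Hp _ _ _ _ S I) as [_ [ExF _]].
  assert (st : forall z : pbP F B C D f g,
     {w | Fmap F p0 w = str F B (p0 z) /\ Fmap F q0 w = str F C (q0 z)}).
  { intro z. apply constructive_indefinite_description. apply ExF.
    rewrite !hom_pt. f_equal. exact (proj2_sig z). }
  pose (Pc := {| carrier := pbP F B C D f g; str := fun z => proj1_sig (st z) |}).
  assert (Hp0 : is_coalg_hom F Pc B p0).
  { unfold is_coalg_hom. apply functional_extensionality. intro z. simpl.
    exact (proj1 (proj2_sig (st z))). }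
  assert (Hq0 : is_coalg_hom F Pc C q0).
  { unfold is_coalg_hom. apply functional_extensionality. intro z. simpl.
    exact (proj2 (proj2_sig (st z))). }
  exists Pc, (exist _ p0 Hp0), (exist _ q0 Hq0).
  split; [apply C3; auto|]; exact S.
Qed.

Lemma C4 (F : Functor SetsCat SetsCat) (Hp : preserves_pullbacks_along_injective F)
  (P B C D : coalg F) (p : coalg_hom F P B)
  (q : coalg_hom F P C) (f : coalg_hom F B D) (g : coalg_hom F C D) :
  @is_pullback (CoalgCat F) P B C D p q f g ->
  injective (proj1_sig f) \/ injective (proj1_sig g) ->
  spb (proj1_sig p) (proj1_sig q) (proj1_sig f) (proj1_sig g).
Proof.
  intros H I.
  destruct (pb_exists F Hp B C D f g I) as [P0 [p0 [q0 [H0 S0]]]].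
  destruct (proj2 H P0 p0 q0 (proj1 H0)) as [psi [[P1 P2] _]].
  destruct (proj2 H0 P p q (proj1 H)) as [phi [[Q1 Q2] _]].
  destruct (proj2 H P p q (proj1 H)) as [w [_ Wu]].
  assert (E1 : w = @comp (CoalgCat F) _ _ _ psi phi).
  { apply Wu. split.
    - rewrite comp_assoc, P1. exact Q1.
    - rewrite comp_assoc, P2. exact Q2. }
  assert (E2 : w = idm (CoalgCat F) P).
  { apply Wu. split; apply comp_id_r. }
  rewrite E1 in E2.
  ceq1in P1. ceq1in P2. ceq1in Q1. ceq1in Q2.
  destruct S0 as [_ [Ex0 Jm0]].
  split; [|split].
  - intro z. exact (proj1 (ceq _ _ _ _ _) (proj1 H) z).
  - intros b c e. destruct (Ex0 b c e) as [z [e1 e2]].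
    exists (proj1_sig psi z). rewrite P1, P2. auto.
  - intros x y e1 e2.
    pose proof (f_equal (fun k => proj1_sig k x) E2) as ex.
    pose proof (f_equal (fun k => proj1_sig k y) E2) as ey. simpl in ex, ey.
    rewrite <- ex, <- ey. f_equal. apply Jm0.
    + rewrite !Q1. exact e1.
    + rewrite !Q2. exact e2.
Qed.

Theorem mainTheorem1 (F : Functor SetsCat SetsCat) :
  preserves_pullbacks_along_injective F ->
  M_adhesive (CoalgCat F) (M_F F).
Proof.
  intro Hp. unfold M_F. split.
  - intros A B m hm Z g h E. apply heq. intro z. apply hm.
    exact (proj1 (ceq _ _ _ _ _) E z).
  - intros A x y e. exact e.
  - intros A B D g f Hf Hg x y e. apply Hf, Hg. exact e.
  - intros A B C m f Hm. destruct (po_exists F A B C m f Hm) as [D [g [n [H _]]]].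
    exists D, g, n. exact H.
  - intros B C D f g I. destruct (pb_exists F Hp B C D f g I) as [P [p [q [H _]]]].
    exists P, p, q. exact H.
  - intros A B C D m f g n H Hm.
    destruct (C2 F A B C D m f g n H Hm) as [_ [_ [_ [Enn _]]]]. exact Enn.
  - intros P B C D p q f g H Hf.
    destruct (C4 F Hp P B C D p q f g H (or_introl Hf)) as [Hc [_ Jm]].
    intros x y e. apply Jm; auto. apply Hf. rewrite !Hc, e. auto.
  - intros A B C D A' B' C' D' m f g n m' f' g' n' a b c d
      Hpo Hm Hc' Hma Hfa Hgb Hnc Hb1 Hb2 Ia Ib Ic Id.
    pose proof (C2 F A B C D m f g n Hpo Hm) as S.
    pose proof (C4 F Hp _ _ _ _ _ _ _ _ Hb1 (or_introl Ib)) as P1.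
    pose proof (C4 F Hp _ _ _ _ _ _ _ _ Hb2 (or_introl Ic)) as P2.
    ceqin Hc'. ceqin Hma. ceqin Hfa. ceqin Hgb. ceqin Hnc.
    assert (Hm' : injective (proj1_sig m')).
    { intros x y e. apply Ia, Hm. rewrite !Hma, e. auto. }
    destruct (VK_sets _ _ _ _ _ _ _ _ _ _ _ _ S Hm Hc' Hma Hfa Hgb Hnc P1 P2 Ia Ib Ic Id)
      as [V1 V2].
    split.
    + intro Htop. pose proof (C2 F _ _ _ _ _ _ _ _ Htop Hm') as [_ [J' _]].
      destruct (V1 J') as [Q1 Q2].
      split; apply C3; auto.
    + intros [Hf1 Hf2].
      apply C1. apply V2.
      * exact (C4 F Hp _ _ _ _ _ _ _ _ Hf1 (or_introl Id)).
      * exact (C4 F Hp _ _ _ _ _ _ _ _ Hf2 (or_introl Id)).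
Qed.
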